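(* Fix $N\ge 2$, $\tau>0$, $\lambda>0$, $\mu\ge 0$ and $c\in\mathbb{R}$. Let $x_i,y_i$ ($i=1,\dots,N$) be the unit-norm embeddings by the labeled-data encoder $f_\theta$ of $N$ positive pairs, with $s^{\theta}_{ij}=\langle x_i,y_j\rangle$; let $z_i$ ($i=1,\dots,N$) be the unit-norm embeddings by the full-data encoder $g_\psi$ of a batch of $N$ molecules from the full dataset, with $s^{\psi}_{ij}=\langle z_i,z_j\rangle$; and let $u_i$ be the unit-norm embeddings of the same $N$ full-dataset molecules by $f_\theta$ with gradients detached, regarded as fixed vectors. Define the soft-label matrix $$\hat\Gamma=\arg\min_{\Gamma\in U(\mathbf 1_N,\mathbf 1_N)}\Big(\langle C^{fix},\Gamma\rangle+\frac{\lambda}{2}\|\Gamma\|_F^2\Big),\qquad C^{fix}_{ij}=c-\langle u_i,u_j\rangle,$$ and the losses $$\mathcal{L}_{sup}(\theta)=-\sum_{i=1}^N\log\frac{\exp(s^{\theta}_{ii}/\tau)}{\sum_{j=1}^N\exp(s^{\theta}_{ij}/\tau)},\qquad \mathcal{L}_{soft}(\psi)=-\sum_{i,j=1}^N\hat\Gamma_{ij}\log\frac{\exp(s^{\psi}_{ij}/\tau)}{\sum_{k=1}^N\exp(s^{\psi}_{ik}/\tau)},$$ $$\mathcal{L}_{reg}(\psi)=-\frac1N\sum_{i=1}^N\log\rho_i,\qquad \rho_i=\min_{j\ne i}\|z_i-z_j\|,$$ and $\mathcal{L}_{total}=\mathcal{L}_{sup}+\mathcal{L}_{soft}+\mu\mathcal{L}_{reg}$.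 Consider the IOT problem $$\min_{\theta,\psi}\ J(\theta,\psi)=KL(\Gamma^{g}\|\Gamma^{\theta})+KL(\hat\Gamma\|\Gamma^{\psi})+\mu\,\mathcal{L}_{reg}(\psi),$$ with $\Gamma^{g}_{ij}=\delta_{ij}/N$, $\Gamma^{\theta}=\arg\min_{\Gamma\in U(\frac1N\mathbf 1)}(\langle C^{\theta},\Gamma\rangle-\tau H(\Gamma))$, $\Gamma^{\psi}=\arg\min_{\Gamma\in U(\frac1N\mathbf 1)}(\langle C^{\psi},\Gamma\rangle-\tau H(\Gamma))$, $C^{\theta}_{ij}=c-s^{\theta}_{ij}$, $C^{\psi}_{ij}=c-s^{\psi}_{ij}$, and with $\hat\Gamma$ treated as fixed (independent of $\theta,\psi$). Then $\hat\Gamma$, $\Gamma^\theta$, $\Gamma^\psi$ are well defined (unique), and for all $\theta,\psi$, $$J(\theta,\psi)=\frac1N\mathcal{L}_{sup}(\theta)+\mathcal{L}_{soft}(\psi)+\mu\,\mathcal{L}_{reg}(\psi)+K,\qquad K=\sum_{i,j}\hat\Gamma_{ij}\log\hat\Gamma_{ij}+N\log N-N+1 .$$ Consequently $(\theta^*,\psi^* )$ minimizes $J$ if and only if $\theta^*$ minimizes $\mathcal{L}_{sup}$ and $\psi^*$ minimizes $\mathcal{L}_{soft}+\mu\mathcal{L}_{reg}$, if and only if $(\theta^*,\psi^* )$ minimizes $\mathcal{L}_{total}$; i.e. the optimal parameters of S-MolSearch are exactly the solutions of this IOT problem.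
   Context: For $a,b\in\mathbb{R}^N_{>0}$: $U(a)=\{\Gamma\in\mathbb{R}^{N\times N}_{\ge 0}:\Gamma\mathbf 1_N=a\}$ and $U(a,b)=\{\Gamma\in\mathbb{R}^{N\times N}_{\ge 0}:\Gamma\mathbf 1_N=a,\ \Gamma^{\top}\mathbf 1_N=b\}$, where $\mathbf 1_N$ is the all-ones vector. $\langle A,B\rangle=\sum_{ij}A_{ij}B_{ij}$ and $\|\cdot\|_F$ is the Frobenius norm. $H(\Gamma)=-\sum_{i,j}\Gamma_{ij}(\log\Gamma_{ij}-1)$. The generalized KL divergence is $KL(X\|Y)=\sum_{i,j}\big(X_{ij}\log\frac{X_{ij}}{Y_{ij}}-X_{ij}+Y_{ij}\big)$ with $0\log 0=0$. $\delta_{ij}$ is the Kronecker delta. Positive pairs $(x_i,y_i)$ are embeddings of two molecules that are active on the same protein target; $\mathcal{L}_{reg}$ is the KoLeo regularizer (assume the $z_i$ are pairwise distinct so that it is finite). Minimizers of the loss functions over the parameter spaces are assumed to be understood as global minimizers (the equivalences hold including the case where the minimizer sets are empty). *)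

(* Defs.v *)
From mathcomp Require Import all_boot all_order all_algebra.
From mathcomp Require Import reals sequences exp.

Set Implicit Arguments.
Unset Strict Implicit.
Unset Printing Implicit Defensive.

Import Order.TTheory GRing.Theory Num.Theory.
Local Open Scope ring_scope.

Section Defs.
Variable R : realType.

Definition dotv (d : nat) (a b : 'rV[R]_d) : R := \sum_(k < d) a 0 k * b 0 k.
Definition normv (d : nat) (a : 'rV[R]_d) : R := Num.sqrt (dotv a a).

Definition frob (N : nat) (A B : 'M[R]_N) : R := \sum_(i < N) \sum_(j < N) A i j * B i j.
Definition frob_sq (N : nat) (A : 'M[R]_N) : R := \sum_(i < N) \sum_(j < N) A i j ^+ 2.

Definition in_U (N : nat) (a : 'I_N -> R) (G : 'M[R]_N) : Prop :=
  (forall i j, 0 <= G i j) /\ (forall i, \sum_(j < N) G i j = a i).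
Definition in_U2 (N : nat) (a b : 'I_N -> R) (G : 'M[R]_N) : Prop :=
  in_U a G /\ (forall j, \sum_(i < N) G i j = b j).

(* H(Gamma) = - sum Gamma_ij (log Gamma_ij - 1)   (0 log 0 = 0: the factor 0 kills the term) *)
Definition entropy (N : nat) (G : 'M[R]_N) : R :=
  - \sum_(i < N) \sum_(j < N) G i j * (ln (G i j) - 1).

(* generalized KL divergence, 0 log 0 = 0 (again the factor X_ij = 0 kills the log term) *)
Definition KLdiv (N : nat) (X Y : 'M[R]_N) : R :=
  \sum_(i < N) \sum_(j < N) (X i j * ln (X i j / Y i j) - X i j + Y i j).

Definition is_minimizer (T : Type) (S : T -> Prop) (f : T -> R) (x : T) : Prop :=
  S x /\ forall y, S y -> f x <= f y.

Definition minimizes (T : Type) (f : T -> R) (x : T) : Prop :=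
  forall y, f x <= f y.

Definition sim (N d : nat) (a b : 'I_N -> 'rV[R]_d) : 'M[R]_N :=
  \matrix_(i, j) dotv (a i) (b j).

Definition cost (N : nat) (c : R) (S : 'M[R]_N) : 'M[R]_N :=
  \matrix_(i, j) (c - S i j).

Definition qot_obj (N : nat) (lam : R) (C : 'M[R]_N) (G : 'M[R]_N) : R :=
  frob C G + lam / 2 * frob_sq G.

Definition eot_obj (N : nat) (tau : R) (C : 'M[R]_N) (G : 'M[R]_N) : R :=
  frob C G - tau * entropy G.

Definition cst (N : nat) (v : R) : 'I_N -> R := fun _ => v.

Definition L_sup (N : nat) (tau : R) (S : 'M[R]_N) : R :=
  - \sum_(i < N) ln (expR (S i i / tau) / \sum_(j < N) expR (S i j / tau)).

Definition L_soft (N : nat) (tau : R) (Ghat S : 'M[R]_N) : R :=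
  - \sum_(i < N) \sum_(j < N)
      Ghat i j * ln (expR (S i j / tau) / \sum_(k < N) expR (S i k / tau)).

(* The neutral element of the iterated min is
   sum_j ||z_i - z_j||, which dominates every term; since N >= 2 the index set
   {j | j <> i} is nonempty, so this is exactly the minimum. *)
Definition rho (N d : nat) (z : 'I_N -> 'rV[R]_d) (i : 'I_N) : R :=
  \big[Num.min / \sum_(j < N) normv (z i - z j)]_(j < N | j != i) normv (z i - z j).

Definition L_reg (N d : nat) (z : 'I_N -> 'rV[R]_d) : R :=
  - (N%:R)^-1 * \sum_(i < N) ln (rho z i).

Definition Gamma_g (N : nat) : 'M[R]_N := \matrix_(i, j) ((i == j)%:R / N%:R).

End Defs.

(* Main.v *)
From mathcomp Require Import all_boot all_order all_algebra.
From mathcomp Require Import all_classical all_reals all_analysis.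
From mathcomp Require Import ring lra.
Require Import Defs.
From mathcomp Require Import reals sequences exp.
Import Order.TTheory GRing.Theory Num.Theory.
Import numFieldNormedType.Exports.
Local Open Scope classical_set_scope.
Local Open Scope ring_scope.
Lemma vec_mxE' (R : realType) N (v : 'rV[R]_(N * N)) i j :
  vec_mx v i j = v 0 (mxvec_index i j).
Proof. by rewrite -[v in RHS]vec_mxK mxvecE. Qed.

Lemma cont_entry (R : realType) N i j :
  continuous (fun v : 'rV[R]_(N * N) => vec_mx v i j).
Proof.
have -> : (fun v : 'rV[R]_(N * N) => vec_mx v i j) = (fun v => v 0 (mxvec_index i j)).
  by apply: funext => v; rewrite vec_mxE'.
exact: coord_continuous.
Qed.

Lemma cont_sum (R : realType) (T : topologicalType) N (F : 'I_N -> T -> R) :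
  (forall i, continuous (F i)) -> continuous (fun x => \sum_(i < N) F i x).
Proof.
move=> H; apply: continuous_big => //.
exact: add_continuous.
Qed.

Lemma closed_forall (T : topologicalType) (I : Type) (P : I -> set T) :
  (forall i, closed (P i)) -> closed [set x | forall i, P i x].
Proof.
move=> H.
have -> : [set x | forall i, P i x] = \bigcap_(i in setT) P i.
  by apply/seteqP; split => x /= Hx i //; apply: Hx.
by apply: closed_bigI => i _; apply: H.
Qed.

Lemma closed_ge0f (R : realType) (T : topologicalType) (g : T -> R) :
  continuous g -> closed [set x | 0 <= g x].
Proof.
move=> cg; apply: (@preimage_closed _ _ g [set y | 0 <= y]); last exact: closed_ge.
by move=> x _; apply: cg.
Qed.

Lemma closed_eqf (R : realType) (T : topologicalType) (g : T -> R) a :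
  continuous g -> closed [set x | g x = a].
Proof.
move=> cg; apply: (@preimage_closed _ _ g [set y | y = a]); last exact: closed_eq.
by move=> x _; apply: cg.
Qed.

Lemma cont_add (R : realType) (T : topologicalType) (g h : T -> R) :
  continuous g -> continuous h -> continuous (fun x => g x + h x).
Proof. by move=> cg ch x; apply: cvgD; [apply: cg | apply: ch]. Qed.

Lemma cont_mul (R : realType) (T : topologicalType) (g h : T -> R) :
  continuous g -> continuous h -> continuous (fun x => g x * h x).
Proof. by move=> cg ch x; apply: cvgM; [apply: cg | apply: ch]. Qed.

Lemma cont_cst (R : realType) (T : topologicalType) (a : R) :
  continuous (fun _ : T => a).
Proof. by move=> x; apply: cvg_cst. Qed.

Lemma qot_exists (R : realType) N (lam : R) (C : 'M[R]_N) :
  exists G, is_minimizer (in_U2 (@Defs.cst R N 1) (@Defs.cst R N 1)) (qot_obj lam C) G.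
Proof.
pose A := [set v : 'rV[R]_(N * N) | in_U2 (@Defs.cst R N 1) (@Defs.cst R N 1) (vec_mx v)].
pose f := fun v : 'rV[R]_(N * N) => qot_obj lam C (vec_mx v).
have A0 : A !=set0.
  exists (mxvec 1%:M); rewrite /A /= mxvecK; split; [split|].
  - by move=> i j; rewrite mxE ler0n.
  - move=> i; rewrite /Defs.cst (bigD1 i) //= big1 ?mxE ?eqxx ?addr0 // => j /negPf ji.
    by rewrite mxE eq_sym ji.
  - move=> j; rewrite /Defs.cst (bigD1 j) //= big1 ?mxE ?eqxx ?addr0 // => i /negPf ji.
    by rewrite mxE ji.
have cA : compact A.
  apply: bounded_closed_compact.
    exists 1; split; first by rewrite num_real.
    move=> M M1 v [[v0 vs] _].
    rewrite /Num.norm /= mx_normrE; apply: bigmax_le; first by apply: le_trans (ltW M1).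
    move=> [a b] _ /=; rewrite (ord1 a); case: (mxvec_indexP b) => i j.
    rewrite -vec_mxE' ger0_norm // (le_trans _ (ltW M1)) //.
    have := vs i; rewrite /Defs.cst => <-; rewrite (bigD1 j) //= lerDl sumr_ge0 //.
  apply: closedI; first apply: closedI.
  - apply: closed_forall => i; apply: closed_forall => j.
    apply: (@closed_ge0f R _ (fun x => vec_mx x i j)); exact: cont_entry.
  - apply: closed_forall => i; apply: closed_eqf.
    by apply: cont_sum => j; apply: cont_entry.
  - apply: closed_forall => j; apply: closed_eqf.
    by apply: cont_sum => i; apply: cont_entry.
have cf : {within A, continuous f}.
  apply: continuous_subspaceT.
  rewrite /f /qot_obj /frob /frob_sq.
  apply: cont_add; last apply: cont_mul; first 2 last.
  - apply: cont_sum => i; apply: cont_sum => j.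
    have -> : (fun x : 'rV[R]_(N * N) => vec_mx x i j ^+ 2) = (fun x => vec_mx x i j * vec_mx x i j).
      by apply: funext => x; rewrite expr2.
    by apply: cont_mul; apply: cont_entry.
  - apply: cont_sum => i; apply: cont_sum => j.
    by apply: cont_mul; [apply: cont_cst | apply: cont_entry].
  - exact: cont_cst.
have [c cA' cmin] := EVT_min_rV A0 cA cf.
exists (vec_mx c); split; first by move: cA'; rewrite inE.
move=> G HG; have := cmin (mxvec G); rewrite /f mxvecK; apply.
by rewrite inE /A /= mxvecK.
Qed.
Local Close Scope classical_set_scope.
Set Implicit Arguments.
Unset Strict Implicit.
Unset Printing Implicit Defensive.
Lemma ln_lt_sub1 (R : realType) (t : R) : 0 < t -> t != 1 -> ln t < t - 1.
Proof.
move=> t0 t1; have := @expR_gt1Dx R (ln t).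
rewrite lnK ?posrE // ln_eq0 // t1 => /(_ isT) H.
lra.
Qed.

Lemma ln_le_sub1 (R : realType) (t : R) : 0 < t -> ln t <= t - 1.
Proof.
move=> t0; have := @expR_ge1Dx R (ln t).
by rewrite lnK ?posrE // lerBrDl addrC.
Qed.

Definition klt (R : realType) (g h : R) := g * ln g - g * ln h - g + h.

Lemma klt_ge0 (R : realType) (g h : R) : 0 <= g -> 0 < h -> 0 <= klt g h.
Proof.
move=> g0 h0; rewrite /klt; have [->|gp] := eqVneq g 0.
  by rewrite !mul0r !subr0 add0r ltW.
have gp' : 0 < g by rewrite lt_def gp.
have := ln_le_sub1 (divr_gt0 h0 gp'); rewrite ln_div ?posrE //.
move=> H; have := ler_wpM2l (ltW gp') H.
rewrite mulrBr mulrBr mulr1 mulrCA divff // mulr1 => H2.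
lra.
Qed.

Lemma klt_eq0 (R : realType) (g h : R) : 0 <= g -> 0 < h -> klt g h = 0 -> g = h.
Proof.
move=> g0 h0; rewrite /klt; have [->|gp] := eqVneq g 0.
  by rewrite !mul0r !subr0 add0r => h00; move: h0; rewrite h00 ltxx.
have gp' : 0 < g by rewrite lt_def gp.
move=> F0; apply/eqP; apply/negPn/negP => gh.
have t1 : h / g != 1.
  apply/negP => /eqP hg1; move: gh; rewrite eq_sym; apply/negP/negPn/eqP.
  by rewrite -[h](@divfK _ g) ?hg1 ?mul1r.
have := ln_lt_sub1 (divr_gt0 h0 gp') t1; rewrite ln_div ?posrE //.
move=> H; have : g * (ln h - ln g) < g * (h / g - 1) by rewrite ltr_pM2l.
rewrite mulrBr mulrBr mulr1 mulrCA divff // mulr1 => H2.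
lra.
Qed.

Definition gibbs (R : realType) N (tau : R) (C : 'M[R]_N) : 'M[R]_N :=
  \matrix_(i, j) ((N%:R)^-1 * (expR (- C i j / tau) / \sum_(k < N) expR (- C i k / tau))).

Lemma Z_gt0 (R : realType) N (tau : R) (C : 'M[R]_N) i (j : 'I_N) :
  0 < \sum_(k < N) expR (- C i k / tau).
Proof.
rewrite (bigD1 j) //=; apply: ltr_pwDl; first exact: expR_gt0.
by apply: sumr_ge0 => k _; apply: expR_ge0.
Qed.

Lemma Npos (R : realType) N (j : 'I_N) : 0 < (N%:R : R).
Proof. by rewrite ltr0n (leq_ltn_trans (leq0n j) (ltn_ord j)). Qed.

Lemma gibbs_gt0 (R : realType) N (tau : R) (C : 'M[R]_N) i j : 0 < gibbs tau C i j.
Proof.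
rewrite mxE mulr_gt0 ?invr_gt0 ?(Npos _ j) // divr_gt0 ?expR_gt0 //.
exact: (Z_gt0 _ _ _ j).
Qed.

Lemma gibbs_row (R : realType) N (tau : R) (C : 'M[R]_N) i :
  \sum_(j < N) gibbs tau C i j = (N%:R)^-1.
Proof.
under eq_bigr do rewrite mxE.
rewrite -mulr_sumr -mulr_suml divff ?mulr1 //.
by rewrite gt_eqF // (Z_gt0 _ _ _ i).
Qed.

Lemma ln_gibbs (R : realType) N (tau : R) (C : 'M[R]_N) i j :
  ln (gibbs tau C i j) = - C i j / tau - (ln (N%:R) + ln (\sum_(k < N) expR (- C i k / tau))).
Proof.
have Np := Npos R j; have Zp := Z_gt0 tau C i j.
rewrite mxE lnM ?posrE ?invr_gt0 ?divr_gt0 ?expR_gt0 // lnV ?posrE //.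
rewrite ln_div ?posrE ?expR_gt0 // expRK; ring.
Qed.

Lemma sum2B3 (R : realType) N (F G H : 'I_N -> 'I_N -> R) :
  \sum_(i < N) \sum_(j < N) (F i j - G i j - H i j) =
  \sum_(i < N) \sum_(j < N) F i j - \sum_(i < N) \sum_(j < N) G i j - \sum_(i < N) \sum_(j < N) H i j.
Proof. by under eq_bigr do rewrite !sumrB; rewrite !sumrB. Qed.

Lemma eot_identity (R : realType) N (tau : R) (C G : 'M[R]_N) : 0 < tau ->
  (forall i, \sum_(j < N) G i j = (N%:R)^-1) ->
  eot_obj tau C G = tau * \sum_(i < N) \sum_(j < N) klt (G i j) (gibbs tau C i j)
    - tau * \sum_(i < N) \sum_(j < N) gibbs tau C i j
    - tau * \sum_(i < N) ((ln (N%:R) + ln (\sum_(k < N) expR (- C i k / tau))) * (N%:R)^-1).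
Proof.
move=> tau0 Grow.
set a := fun i => ln (N%:R) + ln (\sum_(k < N) expR (- C i k / tau)).
rewrite /eot_obj /entropy /frob mulrN opprK mulr_sumr -big_split /=.
have -> : \sum_(i < N) ((\sum_(j < N) C i j * G i j) + tau * \sum_(j < N) G i j * (ln (G i j) - 1)) =
   \sum_(i < N) \sum_(j < N) (tau * klt (G i j) (gibbs tau C i j) - tau * gibbs tau C i j - tau * (a i * G i j)).
  apply: eq_bigr => i _; rewrite mulr_sumr -big_split /=; apply: eq_bigr => j _.
  have Cij : C i j = - tau * (ln (gibbs tau C i j) + a i).
    rewrite ln_gibbs /a; field; by rewrite gt_eqF.
  rewrite Cij /klt; ring.
rewrite sum2B3; congr (_ - _ - _); rewrite mulr_sumr; apply: eq_bigr => i _.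
- by rewrite mulr_sumr.
- by rewrite mulr_sumr.
- by rewrite -mulr_sumr -mulr_sumr Grow.
Qed.

Lemma sum2_eq0 (R : realType) N (F : 'I_N -> 'I_N -> R) :
  (forall i j, 0 <= F i j) -> \sum_(i < N) \sum_(j < N) F i j <= 0 -> forall i j, F i j = 0.
Proof.
move=> F0 S0.
have S0' : \sum_(i < N) \sum_(j < N) F i j = 0.
  by apply/eqP; rewrite eq_le S0 sumr_ge0 // => i _; rewrite sumr_ge0.
move=> i j.
have H1 : forall i, true -> 0 <= \sum_(j < N) F i j.
  by move=> i' _; apply: sumr_ge0 => j' _; apply: F0.
have Hi := @psumr_eq0P _ _ _ _ H1 S0' i isT.
have H2 : forall j, true -> 0 <= F i j by move=> j' _; apply: F0.
exact: (@psumr_eq0P _ _ _ _ H2 Hi j isT).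
Qed.

Lemma eot_min (R : realType) N (tau : R) (C G : 'M[R]_N) : 0 < tau ->
  is_minimizer (in_U (@Defs.cst R N (N%:R)^-1)) (eot_obj tau C) G <-> G = gibbs tau C.
Proof.
move=> tau0.
have feas : in_U (@Defs.cst R N (N%:R)^-1) (gibbs tau C).
  by split => [i j|i]; [apply: ltW; apply: gibbs_gt0 | apply: gibbs_row].
have kself : forall i j, klt (gibbs tau C i j) (gibbs tau C i j) = 0.
  by move=> i j; rewrite /klt; ring.
have Sge0 : forall G', in_U (@Defs.cst R N (N%:R)^-1) G' ->
   0 <= \sum_(i < N) \sum_(j < N) klt (G' i j) (gibbs tau C i j).
  move=> G' [G0 _]; apply: sumr_ge0 => i _; apply: sumr_ge0 => j _.
  by apply: klt_ge0 => //; apply: gibbs_gt0.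
have objG : forall G', in_U (@Defs.cst R N (N%:R)^-1) G' ->
  eot_obj tau C G' - eot_obj tau C (gibbs tau C) =
    tau * \sum_(i < N) \sum_(j < N) klt (G' i j) (gibbs tau C i j).
  move=> G' [_ Gr]; rewrite !eot_identity //; last exact: gibbs_row.
  under [X in _ - (tau * X - _ - _)]eq_bigr do under eq_bigr do rewrite kself.
  have -> : \sum_(i < N) \sum_(j < N) (0:R) = 0 by rewrite big1 // => i _; rewrite big1.
  ring.
split.
- move=> [GU Gmin]; have := Gmin _ feas; rewrite -subr_le0 objG //.
  rewrite pmulr_rle0 // => S0.
  have := sum2_eq0 _ S0 => Hz.
  apply/matrixP => i j; apply: klt_eq0.
  + by case: GU => G0 _; apply: G0.
  + exact: gibbs_gt0.
  + apply: Hz => i' j'; apply: klt_ge0; [by case: GU => G0 _; apply: G0 | exact: gibbs_gt0].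
- move=> ->; split => // y yU; rewrite -subr_ge0 objG //.
  by apply: mulr_ge0; [apply: ltW | apply: Sge0].
Qed.

Lemma sum2_lin (R : realType) N (a b e : R) (F G H : 'I_N -> 'I_N -> R) :
  \sum_(i < N) \sum_(j < N) (a * F i j + b * G i j + e * H i j) =
  a * \sum_(i < N) \sum_(j < N) F i j + b * \sum_(i < N) \sum_(j < N) G i j
  + e * \sum_(i < N) \sum_(j < N) H i j.
Proof.
under eq_bigr do rewrite !big_split /= -!mulr_sumr.
by rewrite !big_split /= -!mulr_sumr.
Qed.

Lemma qot_sum (R : realType) N (lam : R) (C G : 'M[R]_N) :
  qot_obj lam C G = \sum_(i < N) \sum_(j < N) (C i j * G i j + lam / 2 * G i j ^+ 2).
Proof.
rewrite /qot_obj /frob /frob_sq mulr_sumr -big_split; apply: eq_bigr => i _.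
by rewrite mulr_sumr -big_split.
Qed.

Lemma qot_unique (R : realType) N (lam : R) (C G1 G2 : 'M[R]_N) : 0 < lam ->
  is_minimizer (in_U2 (@Defs.cst R N 1) (@Defs.cst R N 1)) (qot_obj lam C) G1 ->
  is_minimizer (in_U2 (@Defs.cst R N 1) (@Defs.cst R N 1)) (qot_obj lam C) G2 ->
  G1 = G2.
Proof.
move=> lam0 [[[G10 G1r] G1c] m1] [[[G20 G2r] G2c] m2].
pose M : 'M[R]_N := \matrix_(i, j) ((G1 i j + G2 i j) / 2).
have MU : in_U2 (@Defs.cst R N 1) (@Defs.cst R N 1) M.
  split; [split|].
  - by move=> i j; rewrite mxE divr_ge0 // addr_ge0.
  - move=> i; under eq_bigr do rewrite mxE; rewrite -mulr_suml big_split /= G1r G2r /Defs.cst.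
    by field.
  - move=> j; under eq_bigr do rewrite mxE; rewrite -mulr_suml big_split /= G1c G2c /Defs.cst.
    by field.
have key : qot_obj lam C M = 1/2 * qot_obj lam C G1 + 1/2 * qot_obj lam C G2
   + (- (lam / 8)) * \sum_(i < N) \sum_(j < N) (G1 i j - G2 i j) ^+ 2.
  rewrite !qot_sum -sum2_lin; apply: eq_bigr => i _; apply: eq_bigr => j _.
  by rewrite !mxE; field.
have e12 := m1 _ (conj (conj G20 G2r) G2c).
have e21 := m2 _ (conj (conj G10 G1r) G1c).
have eM := m1 _ MU.
have D0 : \sum_(i < N) \sum_(j < N) (G1 i j - G2 i j) ^+ 2 <= 0.
  rewrite key in eM.
  have lam8 : 0 < lam / 8 by rewrite divr_gt0.
  set D := \sum_(i < N) \sum_(j < N) _ in eM *.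
  have : lam / 8 * D <= 0 by lra.
  by rewrite pmulr_rle0.
have := sum2_eq0 (fun i j => sqr_ge0 (G1 i j - G2 i j)) D0 => Hz.
apply/matrixP => i j; apply/eqP; rewrite -subr_eq0 -sqrf_eq0; apply/eqP; exact: Hz.
Qed.

Lemma sumexp_gt0 (R : realType) N (f : 'I_N -> R) (j : 'I_N) :
  0 < \sum_(k < N) expR (f k).
Proof.
rewrite (bigD1 j) //=; apply: ltr_pwDl; first exact: expR_gt0.
by apply: sumr_ge0 => k _; apply: expR_ge0.
Qed.

Definition sm (R : realType) N (tau : R) (S : 'M[R]_N) i j :=
  expR (S i j / tau) / \sum_(k < N) expR (S i k / tau).

Lemma sm_gt0 (R : realType) N (tau : R) (S : 'M[R]_N) i j : 0 < sm tau S i j.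
Proof. by rewrite /sm divr_gt0 ?expR_gt0 // (sumexp_gt0 _ j). Qed.

Lemma gibbs_cost (R : realType) N (tau c : R) (S : 'M[R]_N) i j : 0 < tau ->
  gibbs tau (cost c S) i j = (N%:R)^-1 * sm tau S i j.
Proof.
move=> tau0; rewrite /gibbs /sm mxE; congr (_ * _).
have E : forall k, expR (- cost c S i k / tau) = expR (- c / tau) * expR (S i k / tau).
  move=> k; rewrite -expRD mxE; congr expR; field; by rewrite gt_eqF.
under eq_bigr do rewrite E.
rewrite E -mulr_sumr; field; apply/andP; split.
- by rewrite gt_eqF // (sumexp_gt0 _ j).
- by rewrite gt_eqF // expR_gt0.
Qed.

Lemma sm_row (R : realType) N (tau : R) (S : 'M[R]_N) i :
  \sum_(j < N) sm tau S i j = 1.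
Proof.
rewrite /sm -mulr_suml divff //; by rewrite gt_eqF // (sumexp_gt0 _ i).
Qed.

Lemma KL1 (R : realType) N (tau : R) (S Y : 'M[R]_N) : (0 < N)%N ->
  (forall i j, Y i j = (N%:R)^-1 * sm tau S i j) ->
  KLdiv (Gamma_g R N) Y = (N%:R)^-1 * L_sup tau S.
Proof.
move=> N0 HY.
have Np : 0 < (N%:R : R) by rewrite ltr0n.
rewrite /KLdiv /L_sup mulrN mulr_sumr -sumrN; apply: eq_bigr => i _.
rewrite big_split /=.
have -> : \sum_(j < N) Y i j = (N%:R)^-1.
  by under eq_bigr do rewrite HY; rewrite -mulr_sumr sm_row mulr1.
rewrite (bigD1 i) //= big1; last first.
  move=> j /negPf ji; rewrite /Gamma_g mxE eq_sym ji mul0r mul0r subr0.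
  by [].
rewrite /Gamma_g mxE eqxx HY addr0.
have smp := sm_gt0 tau S i i.
have -> : (true%:R : R) = 1 by [].
have -> : 1 / N%:R / (N%:R^-1 * sm tau S i i) = (sm tau S i i)^-1.
  by field; rewrite !gt_eqF.
rewrite lnV ?posrE // /sm; ring.
Qed.

Lemma sum2_5 (R : realType) N (A B C D E : 'I_N -> 'I_N -> R) :
  \sum_(i < N) \sum_(j < N) (A i j + B i j - C i j - D i j + E i j) =
  \sum_(i < N) \sum_(j < N) A i j + \sum_(i < N) \sum_(j < N) B i j
  - \sum_(i < N) \sum_(j < N) C i j - \sum_(i < N) \sum_(j < N) D i j
  + \sum_(i < N) \sum_(j < N) E i j.
Proof.
under eq_bigr do rewrite !(sumrB, big_split) /=.
by rewrite !(sumrB, big_split).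
Qed.

Lemma KL2 (R : realType) N (tau : R) (S G Y : 'M[R]_N) : (0 < N)%N ->
  in_U2 (@Defs.cst R N 1) (@Defs.cst R N 1) G ->
  (forall i j, Y i j = (N%:R)^-1 * sm tau S i j) ->
  KLdiv G Y = L_soft tau G S +
   (\sum_(i < N) \sum_(j < N) G i j * ln (G i j) + N%:R * ln (N%:R) - N%:R + 1).
Proof.
move=> N0 [[G0 Gr] _] HY.
have Np : 0 < (N%:R : R) by rewrite ltr0n.
have term : forall i j, G i j * ln (G i j / Y i j) - G i j + Y i j =
   G i j * ln (G i j) + ln (N%:R) * G i j - G i j * ln (sm tau S i j) - G i j + Y i j.
  move=> i j; have smp := sm_gt0 tau S i j.
  have [->|gp] := eqVneq (G i j) 0; first by rewrite !mul0r !mulr0 !subr0 !add0r.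
  have gp' : 0 < G i j by rewrite lt_def gp G0.
  rewrite HY ln_div ?posrE //; last by rewrite mulr_gt0 ?invr_gt0.
  rewrite lnM ?posrE ?invr_gt0 // lnV ?posrE //.
  ring.
rewrite /KLdiv.
under eq_bigr do under eq_bigr do rewrite term.
rewrite sum2_5.
have SG : \sum_(i < N) \sum_(j < N) G i j = N%:R.
  under eq_bigr do rewrite Gr /Defs.cst.
  by rewrite sumr_const card_ord.
have SY : \sum_(i < N) \sum_(j < N) Y i j = 1.
  under eq_bigr do (under eq_bigr do rewrite HY; rewrite -mulr_sumr sm_row mulr1).
  rewrite sumr_const card_ord -[_ *+ N]mulr_natr mulVf // gt_eqF //.
have SL : \sum_(i < N) \sum_(j < N) ln (N%:R) * G i j = ln (N%:R) * N%:R.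
  rewrite -SG mulr_sumr; apply: eq_bigr => i _; by rewrite mulr_sumr.
rewrite SG SY SL /L_soft /sm.
ring.
Qed.
Lemma sep_min (R : realType) (A B : Type) (h : A * B -> R) (f : A -> R) (g : B -> R) (k K : R)
  (a0 : A) (b0 : B) : 0 < k -> (forall a b, h (a, b) = k * f a + g b + K) ->
  minimizes h (a0, b0) <-> minimizes f a0 /\ minimizes g b0.
Proof.
move=> k0 hE; split.
- move=> H; split.
  + move=> a; have := H (a, b0); rewrite !hE => H'.
    by rewrite -(ler_pM2l k0); lra.
  + move=> b; have := H (a0, b); rewrite !hE => H'; lra.
- move=> [Hf Hg] [a b]; rewrite !hE.
  have := Hf a; rewrite -(ler_pM2l k0) => H1; have := Hg b; lra.
Qed.
Theorem proposition2
  (R : realType) (N d : nat) (tau lam mu c : R)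
  (Theta Psi : Type)
  (x y : Theta -> 'I_N -> 'rV[R]_d)
  (z : Psi -> 'I_N -> 'rV[R]_d)
  (u : 'I_N -> 'rV[R]_d) :
  (1 < N)%N -> 0 < tau -> 0 < lam -> 0 <= mu ->
  (forall th i, normv (x th i) = 1) ->
  (forall th i, normv (y th i) = 1) ->
  (forall ps i, normv (z ps i) = 1) ->
  (forall ps i j, i != j -> z ps i != z ps j) ->
  (forall i, normv (u i) = 1) ->
  let Cfix := cost c (sim u u) in
  let Ctheta := fun th => cost c (sim (x th) (y th)) in
  let Cpsi := fun ps => cost c (sim (z ps) (z ps)) in
  let U11 := in_U2 (@cst R N 1) (@cst R N 1) in
  let UN := in_U (@cst R N (N%:R)^-1) in
  (* well-definedness (existence and uniqueness) of the three argmins *)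
  (exists! Ghat : 'M[R]_N, is_minimizer U11 (qot_obj lam Cfix) Ghat) /\
  (forall th, exists! G : 'M[R]_N, is_minimizer UN (eot_obj tau (Ctheta th)) G) /\
  (forall ps, exists! G : 'M[R]_N, is_minimizer UN (eot_obj tau (Cpsi ps)) G) /\
  (forall (Ghat : 'M[R]_N) (Gth : Theta -> 'M[R]_N) (Gps : Psi -> 'M[R]_N),
    is_minimizer U11 (qot_obj lam Cfix) Ghat ->
    (forall th, is_minimizer UN (eot_obj tau (Ctheta th)) (Gth th)) ->
    (forall ps, is_minimizer UN (eot_obj tau (Cpsi ps)) (Gps ps)) ->
    let Lsup := fun th => L_sup tau (sim (x th) (y th)) in
    let Lsoft := fun ps => L_soft tau Ghat (sim (z ps) (z ps)) in
    let Lreg := fun ps => L_reg (z ps) in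
    let J := fun tp : Theta * Psi =>
      KLdiv (Gamma_g R N) (Gth tp.1) + KLdiv Ghat (Gps tp.2) + mu * Lreg tp.2 in
    let Ltotal := fun tp : Theta * Psi => Lsup tp.1 + Lsoft tp.2 + mu * Lreg tp.2 in
    let K := \sum_(i < N) \sum_(j < N) Ghat i j * ln (Ghat i j)
             + N%:R * ln (N%:R) - N%:R + 1 in
    (forall th ps,
       J (th, ps) = (N%:R)^-1 * Lsup th + Lsoft ps + mu * Lreg ps + K) /\
    (forall th0 ps0,
       (minimizes J (th0, ps0) <->
          minimizes Lsup th0 /\ minimizes (fun ps => Lsoft ps + mu * Lreg ps) ps0) /\
       (minimizes Lsup th0 /\ minimizes (fun ps => Lsoft ps + mu * Lreg ps) ps0 <->
          minimizes Ltotal (th0, ps0)))).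
Proof.
move=> N1 tau0 lam0 mu0 _ _ _ _ _ Cfix Ctheta Cpsi U11 UN.
have N0 : (0 < N)%N by apply: ltn_trans N1.
split.
  have [G HG] := @qot_exists R N lam Cfix.
  exists G; split => // G' HG'; exact: qot_unique lam0 HG HG'.
split.
  move=> th; exists (gibbs tau (Ctheta th)); split.
    by apply/eot_min.
  by move=> G' /(eot_min _ _ tau0) ->.
split.
  move=> ps; exists (gibbs tau (Cpsi ps)); split.
    by apply/eot_min.
  by move=> G' /(eot_min _ _ tau0) ->.
move=> Ghat Gth Gps HGhat HGth HGps Lsup Lsoft Lreg J Ltotal K.
have Gth_eq : forall th, Gth th = gibbs tau (Ctheta th).
  by move=> th; apply/(eot_min _ _ tau0); apply: HGth.
have Gps_eq : forall ps, Gps ps = gibbs tau (Cpsi ps).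
  by move=> ps; apply/(eot_min _ _ tau0); apply: HGps.
have JE : forall th ps,
    J (th, ps) = (N%:R)^-1 * Lsup th + Lsoft ps + mu * Lreg ps + K.
  move=> th ps; rewrite /J /= Gth_eq Gps_eq.
  rewrite (KL1 (tau := tau) N0 (S := sim (x th) (y th))); last first.
    by move=> i j; rewrite gibbs_cost.
  rewrite (KL2 (tau := tau) N0 (S := sim (z ps) (z ps)) HGhat.1); last first.
    by move=> i j; rewrite gibbs_cost.
  rewrite /Lsup /Lsoft /K; ring.
split; first exact: JE.
move=> th0 ps0; split.
  apply: (sep_min (k := (N%:R)^-1) (K := K)).
    by rewrite invr_gt0 ltr0n.
  by move=> a b; rewrite JE; ring.
have LE : forall a b, Ltotal (a, b) = 1 * Lsup a + (Lsoft b + mu * Lreg b) + 0.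
  by move=> a b; rewrite /Ltotal /=; ring.
by rewrite (sep_min th0 ps0 ltr01 LE).
Qed.
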